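(* Let $N\ge1$ and $(w,a,\theta)\in\widetilde{\mathcal{D}}_N$. There exists $\omega_0<0$ such that $M_{\mathrm{e}^{i\omega}}(w,a,\theta)\in\mathcal{D}_N$ for every real $\omega$ with $\omega_0\le\omega<0$.
   Context: $P_N=\{1,\dots,N\}$; vectors are functions on $P_N$, $v^{-1}[S]=\{\ell:v_\ell\in S\}$, $\mathrm{Tr}(v,\Lambda):=\sum_{\ell\in\Lambda}v_\ell$. $\mathcal{C}:=\{z:\mathrm{Re}(z)>0\text{ or }z\in i\mathbb{R}_{>0}\}$, $\mathcal{C}^\circ$ the open right half-plane. $\mathbb{D}_N:=\{(w,a,\theta)\in\mathbb{C}\times\mathbb{C}^N\times\mathbb{R}^N:a^{-1}[0]\subseteq\theta^{-1}[\mathbb{R}\smallsetminus\mathbb{Z}]\}$, $\pi(w,a,\theta):=w-\mathrm{Tr}(a,a^{-1}[-\mathcal{C}])$, $\widetilde{\mathcal{D}}_N:=\{\delta\in\mathbb{D}_N:\pi(\delta)\in\mathcal{C}\}$, $\mathcal{D}_N:=\{(w,a,\theta)\in\mathbb{D}_N:\pi(w,a,\theta)\in\mathcal{C}^\circ,\ a_\ell\notin i\mathbb{R}\smallsetminus\{0\}\ \forall\ell\}$. $M_\beta(w,a,\theta):=(\beta w,\beta a,\theta)$. *)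

(* Defs.v *)
From Stdlib Require Import Reals ZArith.
From Coquelicot Require Import Coquelicot.
Open Scope R_scope.

(* Vectors on P_N = {1,...,N} are modelled as functions nat -> _; only the
   values at indices 1..N are ever used. *)
Definition inPN (N l : nat) : Prop := (1 <= l <= N)%nat.

Definition inCC (z : C) : Prop := 0 < Re z \/ (Re z = 0 /\ 0 < Im z).
Definition inCCo (z : C) : Prop := 0 < Re z.
Definition inNegCC (z : C) : Prop := inCC (Copp z).

Definition inCCb (z : C) : bool :=
  if Rlt_dec 0 (Re z) then true
  else if Req_EM_T (Re z) 0 then (if Rlt_dec 0 (Im z) then true else false)
  else false.

Lemma inCCb_spec z : inCCb z = true <-> inCC z.
Proof.
  unfold inCCb, inCC.
  destruct (Rlt_dec 0 (Re z)) as [h|h]; [tauto|].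
  destruct (Req_EM_T (Re z) 0) as [e|e];
  destruct (Rlt_dec 0 (Im z)) as [g|g]; split; intros H;
    try discriminate; try tauto.
Qed.

Fixpoint TrNeg (a : nat -> C) (n : nat) : C :=
  match n with
  | O => RtoC 0
  | S k => Cplus (TrNeg a k) (if inCCb (Copp (a (S k))) then a (S k) else RtoC 0)
  end.

Definition piD (N : nat) (w : C) (a : nat -> C) : C := Cminus w (TrNeg a N).

Definition is_integer (x : R) : Prop := exists k : Z, x = IZR k.

Definition in_DD (N : nat) (w : C) (a : nat -> C) (theta : nat -> R) : Prop :=
  forall l, inPN N l -> a l = RtoC 0 -> ~ is_integer (theta l).

Definition in_Dtilde (N : nat) (w : C) (a : nat -> C) (theta : nat -> R) : Prop :=
  in_DD N w a theta /\ inCC (piD N w a).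

Definition in_iR_nonzero (z : C) : Prop := Re z = 0 /\ z <> RtoC 0.

Definition in_D (N : nat) (w : C) (a : nat -> C) (theta : nat -> R) : Prop :=
  in_DD N w a theta /\ inCCo (piD N w a) /\
  (forall l, inPN N l -> ~ in_iR_nonzero (a l)).

Definition cexpi (om : R) : C := (cos om, sin om).

(* M_β(w,a,θ) = (βw, βa, θ): we record the first two components *)
Definition M_w (beta w : C) : C := Cmult beta w.
Definition M_a (beta : C) (a : nat -> C) : nat -> C := fun l => Cmult beta (a l).

(* Main.v *)
Require Import Defs.
From Stdlib Require Import Reals ZArith Lra Lia Psatz.
From Coquelicot Require Import Coquelicot.
Open Scope R_scope.

Lemma trig_facts om : -(1/2) <= om < 0 -> om < sin om < 0 /\ 1/2 < cos om.
Proof.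
  intros [h1 h2].
  assert (PI2_1 := PI2_1).
  assert (hs : sin om < 0) by (apply sin_lt_0_var; lra).
  assert (hx : sin (-om) < -om) by (apply sin_lt_x; lra).
  rewrite sin_neg in hx.
  assert (hc : 0 < cos om) by (apply cos_gt_0; lra).
  assert (hsc := sin2_cos2 om). unfold Rsqr in hsc.
  split; [lra|]. nra.
Qed.

Lemma rot_sign (x y : R) : exists e, 0 < e /\ forall om, -e <= om < 0 ->
  (0 < x -> 0 < cos om * x - sin om * y) /\
  (x < 0 -> cos om * x - sin om * y < 0) /\
  (x = 0 -> 0 < y -> 0 < cos om * x - sin om * y) /\
  (x = 0 -> y < 0 -> cos om * x - sin om * y < 0).
Proof.
  destruct (Req_dec x 0) as [hx|hx].
  - exists (1/2). split; [lra|]. intros om hom.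
    destruct (trig_facts om) as [[h1 h2] h3]; [lra|].
    subst x. repeat split; intros; try lra; nra.
  - set (k := Rabs x / (2 * (Rabs y + 1))).
    assert (hax : 0 < Rabs x) by (apply Rabs_pos_lt; auto).
    assert (hay := Rabs_pos y).
    assert (hk : 0 < k) by (unfold k; apply Rdiv_lt_0_compat; lra).
    exists (Rmin (1/2) k). split; [apply Rmin_glb_lt; lra|].
    intros om hom.
    assert (hm1 := Rmin_l (1/2) k). assert (hm2 := Rmin_r (1/2) k).
    destruct (trig_facts om) as [[h1 h2] h3]; [lra|].
    assert (hsy : Rabs (sin om * y) < Rabs x / 2).
    { rewrite Rabs_mult. rewrite (Rabs_left (sin om)) by lra.
      assert (-sin om * Rabs y <= k * Rabs y) by nra.
      assert (k * Rabs y < k * (Rabs y + 1)) by nra.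
      assert (k * (Rabs y + 1) = Rabs x / 2) by (unfold k; field; lra).
      lra. }
    assert (hle := Rle_abs (sin om * y)).
    assert (hle2 := Rabs_maj2 (sin om * y)).
    repeat split; intros; try lra.
    + rewrite (Rabs_right x) in hsy by lra. nra.
    + rewrite (Rabs_left x) in hsy by lra. nra.
Qed.

Lemma fin_min (P : nat -> R -> Prop) n :
  (forall l, (1 <= l <= n)%nat -> exists e, 0 < e /\ forall om, -e <= om < 0 -> P l om) ->
  exists e, 0 < e /\ forall om, -e <= om < 0 -> forall l, (1 <= l <= n)%nat -> P l om.
Proof.
  induction n as [|n IH]; intros H.
  - exists 1. split; [lra|]. intros; lia.
  - destruct IH as [e1 [he1 H1]].
    { intros l hl. apply H. lia. }
    destruct (H (S n)) as [e2 [he2 H2]]; [lia|].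
    exists (Rmin e1 e2). split; [apply Rmin_glb_lt; lra|].
    intros om hom l hl.
    assert (hm1 := Rmin_l e1 e2). assert (hm2 := Rmin_r e1 e2).
    destruct (Nat.eq_dec l (S n)) as [->|hne].
    + apply H2; lra.
    + apply H1; [lra| lia].
Qed.

Lemma TrNeg_rot (b : C) a n :
  (forall l, (1 <= l <= n)%nat -> inCCb (Copp (Cmult b (a l))) = inCCb (Copp (a l))) ->
  TrNeg (M_a b a) n = Cmult b (TrNeg a n).
Proof.
  induction n as [|n IH]; intros H; simpl.
  - rewrite Cmult_0_r. reflexivity.
  - rewrite IH by (intros; apply H; lia).
    unfold M_a. rewrite H by lia.
    destruct (inCCb (Copp (a (S n)))); rewrite Cmult_plus_distr_l;
      [reflexivity| rewrite Cmult_0_r; reflexivity].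
Qed.

Lemma elem_ok (z : C) om :
  -(1/2) <= om < 0 ->
  (0 < Re z -> 0 < cos om * Re z - sin om * Im z) ->
  (Re z < 0 -> cos om * Re z - sin om * Im z < 0) ->
  (Re z = 0 -> 0 < Im z -> 0 < cos om * Re z - sin om * Im z) ->
  (Re z = 0 -> Im z < 0 -> cos om * Re z - sin om * Im z < 0) ->
  inCCb (Copp (Cmult (cexpi om) z)) = inCCb (Copp z) /\
  ~ in_iR_nonzero (Cmult (cexpi om) z).
Proof.
  intros hom c1 c2 c3 c4.
  destruct z as [x y]. simpl in *.
  destruct (trig_facts om hom) as [[h1 h2] h3].
  split.
  - apply Bool.eq_iff_eq_true. rewrite !inCCb_spec.
    unfold inCC, Copp, Cmult, cexpi, Re, Im; simpl.
    destruct (Rtotal_order x 0) as [hx|[hx|hx]].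
    + specialize (c2 hx). lra.
    + subst x. destruct (Rtotal_order y 0) as [hy|[hy|hy]].
      * specialize (c4 eq_refl hy). lra.
      * subst y. rewrite !Rmult_0_r. split; intros [?|[? ?]]; lra.
      * specialize (c3 eq_refl hy). lra.
    + specialize (c1 hx). lra.
  - unfold in_iR_nonzero, Cmult, cexpi, Re, Im; simpl. intros [hr hnz].
    destruct (Rtotal_order x 0) as [hx|[hx|hx]].
    + specialize (c2 hx). lra.
    + subst x. destruct (Rtotal_order y 0) as [hy|[hy|hy]].
      * specialize (c4 eq_refl hy). lra.
      * subst y. apply hnz. unfold RtoC. f_equal; ring.
      * specialize (c3 eq_refl hy). lra.
    + specialize (c1 hx). lra.
Qed.

Theorem lemma6 (N : nat) (w : C) (a : nat -> C) (theta : nat -> R) :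
  (1 <= N)%nat ->
  in_Dtilde N w a theta ->
  exists om0 : R, om0 < 0 /\
    forall om : R, om0 <= om < 0 ->
      in_D N (M_w (cexpi om) w) (M_a (cexpi om) a) theta.
Proof.
  intros _ [hDD hpi].
  destruct (fin_min (fun l om =>
     (0 < Re (a l) -> 0 < cos om * Re (a l) - sin om * Im (a l)) /\
     (Re (a l) < 0 -> cos om * Re (a l) - sin om * Im (a l) < 0) /\
     (Re (a l) = 0 -> 0 < Im (a l) -> 0 < cos om * Re (a l) - sin om * Im (a l)) /\
     (Re (a l) = 0 -> Im (a l) < 0 -> cos om * Re (a l) - sin om * Im (a l) < 0)) N)
    as [eL [heL HL]].
  { intros l _. apply rot_sign. }
  set (p := piD N w a) in *.
  destruct (rot_sign (Re p) (Im p)) as [e0 [he0 H0]].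
  exists (- Rmin (1/2) (Rmin e0 eL)).
  assert (hm1 := Rmin_l (1/2) (Rmin e0 eL)). assert (hm2 := Rmin_r (1/2) (Rmin e0 eL)).
  assert (hm3 := Rmin_l e0 eL). assert (hm4 := Rmin_r e0 eL).
  split.
  { assert (0 < Rmin (1/2) (Rmin e0 eL)) by (repeat apply Rmin_glb_lt; lra). lra. }
  intros om hom.
  assert (hom' : -(1/2) <= om < 0) by lra.
  assert (HE : forall l, (1 <= l <= N)%nat ->
    inCCb (Copp (Cmult (cexpi om) (a l))) = inCCb (Copp (a l)) /\
    ~ in_iR_nonzero (Cmult (cexpi om) (a l))).
  { intros l hl. destruct (HL om ltac:(lra) l hl) as [c1 [c2 [c3 c4]]].
    apply elem_ok; auto. }
  split; [|split].
  - intros l hl hz. apply (hDD l hl).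
    unfold M_a in hz.
    destruct (a l) as [x y] eqn:Ea. unfold Cmult, cexpi, RtoC in hz; simpl in hz.
    injection hz as hz1 hz2.
    destruct (trig_facts om hom') as [[h1 h2] h3].
    assert (hsc := sin2_cos2 om). unfold Rsqr in hsc.
    assert (x = 0) by nra. assert (y = 0) by nra. subst. reflexivity.
  - unfold inCCo, piD. rewrite TrNeg_rot by (intros l hl; apply HE; auto).
    destruct (H0 om ltac:(lra)) as [c1 [c2 [c3 c4]]].
    unfold p, piD in *. unfold M_w.
    destruct w as [w1 w2]. destruct (TrNeg a N) as [t1 t2].
    unfold inCC in hpi. simpl in *.
    assert (E : cos om * (w1 + - t1) - sin om * (w2 + - t2) =
                cos om * w1 - sin om * w2 + - (cos om * t1 - sin om * t2)) by ring.
    destruct hpi as [hp|[hp1 hp2]]; [specialize (c1 hp)|specialize (c3 hp1 hp2)]; lra.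
  - intros l hl. apply HE; auto.
Qed.
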